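(* Let $\mathcal{X}=\mathcal{Y}=\mathbb{R}$ and let $\ell^{\mathrm{obj}}(y,y')=\ell^{\mathrm{con}}(y,y')=(y-y')^2$. Let $\ell^{\mathrm{a}}:\mathbb{R}\times\mathbb{R}\to\mathbb{R}$ be a p-distance function, i.e. $\ell^{\mathrm{a}}(y,y')\ge 0$ for all $y,y'$, and $\ell^{\mathrm{a}}(y,y')=0$ if and only if $y=y'$. Let $Q$ and $P$ be absolutely continuous probability measures on $\mathbb{R}$ with $\operatorname{supp}(Q)=[a,b]$ and $\operatorname{supp}(P)=[c,d]$, where $a<b\le c<d$. Let $F$ and $H$ be $L$-Lipschitz function spaces (classes of $L$-Lipschitz functions $\mathbb{R}\to\mathbb{R}$), and let $G=\{g:\mathbb{R}\to\mathbb{R}\}$ be the set of all functions. Let $\varepsilon\ge 0$ and $f\in F$. Consider the expected BODAME problem $$\max_{g\in G}\ \mathbb{E}_{X\sim Q}\big[\ell^{\mathrm{obj}}(f(X),h_g(X))\big]$$ subject to $h_g=\operatorname{argmin}_{h\in H}\mathbb{E}_{X\sim P}[\ell^{\mathrm{a}}(g(X),h(X))]$ and $\mathbb{E}_{X\sim Q}[\ell^{\mathrm{con}}(f(X),g(X))]\le\varepsilon$. Then the optimal value of this problem is $\infty$.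
   Context: In this problem a defender with true model $f$ publishes a surrogate model $g$, which must approximate $f$ up to $\varepsilon$ on the defender's distribution $Q$; an attacker fits a model $h_g\in H$ to the outputs of $g$ by minimizing the expected loss $\ell^{\mathrm{a}}$ on the attacker's distribution $P$; the defender maximizes the expected discrepancy between $f$ and $h_g$ on $Q$. ''Optimal value is $\infty$'' means the supremum of the objective over feasible $g$ is $+\infty$. *)

(* Defs.v *)
From HB Require Import structures.
From mathcomp Require Import all_boot all_order all_algebra.
From mathcomp Require Import all_classical all_reals all_analysis.
Set Implicit Arguments. Unset Strict Implicit. Unset Printing Implicit Defensive.
Import Order.TTheory GRing.Theory Num.Theory numFieldNormedType.Exports.
Local Open Scope classical_set_scope.
Local Open Scope ring_scope.

(* Topological support of a measure on R: the points all of whose open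
   neighbourhoods have positive measure (= the smallest closed set of full
   measure). *)
Definition msupport (R : realType) (mu : set R -> \bar R) : set R :=
  [set x | forall U : set R, open U -> U x -> (0 < mu U)%E].

Definition lipschitz_with (R : realType) (L : R) (h : R -> R) : Prop :=
  forall x y : R, `|h x - h y| <= L * `|x - y|.

Definition p_distance (R : realType) (l : R -> R -> R) : Prop :=
  (forall y y' : R, 0 <= l y y') /\ (forall y y' : R, l y y' = 0 <-> y = y').

Definition expected_loss (R : realType) (mu : set R -> \bar R)
  (loss : R -> R -> R) (u v : R -> R) : \bar R :=
  (\int[mu]_x (loss (u x) (v x))%:E)%E.

Definition sqloss (R : realType) (y y' : R) : R := (y - y') ^+ 2.

Definition attacker_best (R : realType) (P : set R -> \bar R) (la : R -> R -> R)
  (L : R) (g h : R -> R) : Prop :=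
  lipschitz_with L h /\
  forall h' : R -> R, lipschitz_with L h' ->
    (expected_loss P la g h <= expected_loss P la g h')%E.

(* Main.v *)
Require Import Defs.
From HB Require Import structures.
From mathcomp Require Import all_boot all_order all_algebra.
From mathcomp Require Import all_classical all_reals all_analysis.
From mathcomp Require Import measurable_realfun.
From mathcomp Require Import lra.
Import Order.TTheory GRing.Theory Num.Theory numFieldNormedType.Exports.
Local Open Scope classical_set_scope.
Local Open Scope ring_scope.
Lemma null_compact (R : realType) (mu : {measure set R -> \bar R}) (K : set R) :
  compact K -> measurable K ->
  (forall x, K x -> exists U, open U /\ U x /\ mu U = 0%E) -> mu K = 0%E.
Proof.
move=> cK mK hU.
have [F hF] := @choice _ _ (fun x U => K x -> open U /\ U x /\ mu U = 0%E) (fun x =>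
  match pselect (K x) with
  | left Kx => let: ex_intro U HU := hU x Kx in ex_intro _ U (fun _ => HU)
  | right nKx => ex_intro _ set0 (fun Kx => False_ind _ (nKx Kx))
  end).
rewrite compact_cover in cK.
have [D' D'K KD'] := cK R K F (fun i Ki => (hF i Ki).1)
   (fun x Kx => ex_intro2 _ _ x Kx (hF x Kx).2.1).
apply/eqP; rewrite eq_le measure_ge0 andbT.
apply: (le_trans (content_sub_fsum mu (finite_fset D') _ mK KD')).
  move=> i Di; apply: open_measurable; have := D'K i Di; rewrite inE => Ki.
  exact: (hF i Ki).1.
rewrite fsbig1 // => i Di; have := D'K i Di; rewrite inE => Ki.
exact: (hF i Ki).2.2.
Qed.

Lemma exists_n (R : realType) (y : R) : 0 < y ->
  exists n : nat, (n.+1%:R)^-1 <= y /\ y <= n.+1%:R.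
Proof.
move=> y0; exists (Num.trunc y^-1 + Num.trunc y)%N; split.
- rewrite invf_ple ?posrE ?ltr0n //.
  apply: (le_trans (ltW (truncnS_gt y^-1))).
  by rewrite ler_nat ltnS leq_addr.
- apply: (le_trans (ltW (truncnS_gt y))).
  by rewrite ler_nat ltnS leq_addl.
Qed.

Lemma null_cover (R : realType) (mu : {measure set R -> \bar R}) (A : set R)
  (K : nat -> set R) : measurable A -> A `<=` \bigcup_n K n ->
  (forall n, compact (K n)) ->
  (forall x, (exists n, K n x) -> exists U, open U /\ U x /\ mu U = 0%E) ->
  mu A = 0%E.
Proof.
move=> mA AK cK hU.
have K0 n : mu (K n) = 0%E.
  apply: null_compact => //; first exact: compact_measurable.
  by move=> x Kx; apply: hU; exists n.
apply/eqP; rewrite eq_le measure_ge0 andbT.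
apply: le_trans (measure_sigma_subadditive _ _ mA AK) _.
  by move=> n; exact: compact_measurable.
by rewrite eseries0.
Qed.

Lemma null_right (R : realType) (mu : {measure set R -> \bar R}) (b : R) :
  (forall x, b < x -> exists U, open U /\ U x /\ mu U = 0%E) ->
  mu [set` `]b, +oo[] = 0%E.
Proof.
move=> hU.
apply: (@null_cover _ _ _ (fun n => [set` `[b + (n.+1%:R)^-1, b + n.+1%:R]])).
- exact: measurable_itv.
- move=> x; rewrite /= in_itv /= andbT => bx.
  have [n [h1 h2]] := @exists_n _ (x - b) ltac:(by rewrite subr_gt0).
  exists n => //=; rewrite in_itv /=; apply/andP; split.
    by rewrite -lerBrDl.
  by rewrite -lerBlDl.
- by move=> n; exact: segment_compact.
move=> x [n]; rewrite /= in_itv /= => /andP[h _]; apply: hU.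
by apply: lt_le_trans h; rewrite ltrDl invr_gt0 ltr0n.
Qed.

Lemma null_left (R : realType) (mu : {measure set R -> \bar R}) (c : R) :
  (forall x, x < c -> exists U, open U /\ U x /\ mu U = 0%E) ->
  mu [set` `]-oo, c[] = 0%E.
Proof.
move=> hU.
apply: (@null_cover _ _ _ (fun n => [set` `[c - n.+1%:R, c - (n.+1%:R)^-1]])).
- exact: measurable_itv.
- move=> x; rewrite /= in_itv /= => xc.
  have [n [h1 h2]] := @exists_n _ (c - x) ltac:(by rewrite subr_gt0).
  exists n => //=; rewrite in_itv /=; apply/andP; split.
    by rewrite lerBlDr -lerBlDl.
  by rewrite lerBrDr -lerBrDl.
- by move=> n; exact: segment_compact.
move=> x [n]; rewrite /= in_itv /= => /andP[_ h]; apply: hU.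
by apply: le_lt_trans h _; rewrite ltrBlDr ltrDl invr_gt0 ltr0n.
Qed.

Lemma lip_cont (R : realType) (L : R) (h : R -> R) : 0 <= L ->
  (forall x y : R, `|h x - h y| <= L * `|x - y|) -> continuous h.
Proof.
move=> L0 hL x; apply/cvgrPdist_lt => e e0.
have L1 : 0 < L + 1 by rewrite ltr_wpDl.
have ed : 0 < e / (L + 1) by rewrite divr_gt0.
near=> y.
have xy : `|x - y| < e / (L + 1).
  near: y; exact: (@cvgr_dist_lt _ _ _ (nbhs x) _ id x cvg_id _ ed).
apply: (le_lt_trans (hL x y)).
apply: (@le_lt_trans _ _ (L * (e / (L + 1)))).
  by rewrite ler_wpM2l // ltW.
rewrite mulrA ltr_pdivrMr // [L * e]mulrC ltr_pM2l //.
by rewrite ltrDl.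
Unshelve. all: by end_near.
Qed.

Lemma not_supp (R : realType) (mu : {measure set R -> \bar R}) (x : R) :
  ~ (forall U : set R, open U -> U x -> (0 < mu U)%E) ->
  exists U : set R, open U /\ U x /\ mu U = 0%E.
Proof.
move=> ns; apply: contrapT => hn; apply: ns => U oU Ux.
rewrite lt_neqAle measure_ge0 andbT eq_sym; apply/negP => /eqP Q0.
by apply: hn; exists U.
Qed.

Theorem theorem2 (R : realType) (la : R -> R -> R)
  (Q P : probability R R) (a b c d L eps : R) (f : R -> R) :
  p_distance la ->
  measurable_fun [set: R * R] (fun p : R * R => la p.1 p.2) ->
  Q `<< (@lebesgue_measure R) -> P `<< (@lebesgue_measure R) ->
  a < b -> b <= c -> c < d ->
  msupport Q = [set` `[a, b]] -> msupport P = [set` `[c, d]] ->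
  0 <= L -> 0 <= eps -> lipschitz_with L f ->
  forall M : R,
    exists g : R -> R,
      (expected_loss Q (@sqloss R) f g <= eps%:E)%E /\
      (exists h : R -> R, attacker_best P la L g h) /\
      (forall h : R -> R, attacker_best P la L g h ->
         (M%:E <= expected_loss Q (@sqloss R) f h)%E).
Proof.
move=> [la0 laeq] mla hQ hP ab bc cd sQ sP L0 eps0 fL M.
have QR : Q [set` `]b, +oo[] = 0%E.
  apply: null_right => x bx; apply: not_supp.
  move=> hx; have : msupport Q x by [].
  by rewrite sQ /= in_itv /= => /andP[_]; rewrite leNgt bx.
have Qb : Q [set b] = 0%E.
  apply/(measure0_null_setP Q (measurable_set1 b)); apply: hQ.
  exact/(measure0_null_setP lebesgue_measure (measurable_set1 b))/lebesgue_measure_set1.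
have QC : Q [set` `[c, +oo[] = 0%E.
  apply/eqP; rewrite eq_le measure_ge0 andbT.
  apply: (@le_trans _ _ (Q ([set b] `|` [set` `]b, +oo[]))).
    apply: le_measure; rewrite ?inE; try apply: measurableU;
      try exact: measurable_itv; try exact: measurable_set1.
    move=> x /=; rewrite !in_itv /= !andbT => cx.
    have := le_trans bc cx; rewrite le_eqVlt => /orP[/eqP->|]; [by left|by right].
  apply: le_trans (measureU2 Q (measurable_set1 b) (measurable_itv `]b, +oo[)) _.
  have Qb' : (Q [set b] <= 0)%E by rewrite Qb.
  have QR' : (Q [set` `]b, +oo[] <= 0)%E by rewrite QR.
  by apply: le_trans (leeD Qb' QR') _; rewrite adde0.
have PL : P [set` `]-oo, c[] = 0%E.
  apply: null_left => x xc; apply: not_supp.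
  move=> hx; have : msupport P x by [].
  by rewrite sP /= in_itv /= => /andP[]; rewrite leNgt xc.
have fc : continuous f := @lip_cont _ L f L0 fL.
have mf : measurable_fun setT f := continuous_measurable_fun fc.
pose Ia : set R := [set` `]a - 1, a + 1[].
have mIa : measurable Ia by exact: measurable_itv.
have oIa : open Ia by exact: interval_open.
have QIa : (0 < Q Ia)%E.
  have : msupport Q a by rewrite sQ /= in_itv /= lexx ltW.
  apply => //; by rewrite /Ia /= in_itv /= ltrDl ltrBlDr ltrDl ltr01.
pose q := fine (Q Ia).
have Qq : Q Ia = q%:E.
  rewrite fineK // ge0_fin_numE ?measure_ge0 //.
  by apply: le_lt_trans (probability_le1 Q mIa) _; rewrite ltey.
have q0 : 0 < q by rewrite -lte_fin -Qq.
have q1 : q <= 1 by rewrite -lee_fin -Qq probability_le1.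
pose t := (`|M| + 1) / q.
have tq : t * q = `|M| + 1 by rewrite /t divfK // gt_eqF.
have t1 : `|M| + 1 <= t.
  rewrite /t ler_pdivlMr // -[leRHS]mulr1 ler_wpM2l //.
pose B1 := L * (`|a - c| + 2).
pose B2 := `|f a| + L.
pose K := B1 + B2 + t.
pose g := fun x => if x < c then f x else K.
have mg : measurable_fun setT g.
  apply: measurable_fun_ifT => //.
  have := @measurable_fun_ltr _ _ _ setT id (cst c) (@measurable_id _ _ _) (measurable_cst c).
  exact.
have mlah h : measurable_fun setT h -> measurable_fun setT (fun x => (la (g x) (h x))%:E).
  move=> mh; apply/measurable_EFinP.
  exact: (measurableT_comp mla (measurable_fun_pair mg mh)).
have Klip : lipschitz_with L (fun _ => K).
  by move=> x y; rewrite subrr normr0 mulr_ge0.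
have EK : expected_loss P la g (fun _ => K) = 0%E.
  rewrite /expected_loss (@ge0_negligible_integral _ _ _ P setT [set` `]-oo, c[]) //.
  - rewrite -(integral0 P (setT `\` [set` `]-oo, c[])); apply: eq_integral => x.
    rewrite inE /= in_itv /= => -[_ /negP]; rewrite -leNgt => cx.
    by rewrite /g ltNge cx /= (laeq K K).2.
  - exact: mlah (measurable_cst _).
  - by move=> x _; rewrite lee_fin la0.
exists g; split.
  apply: le_trans (lee_tofin eps0); rewrite le_eqVlt; apply/orP; left; apply/eqP.
  rewrite /expected_loss (@ge0_negligible_integral _ _ _ Q setT [set` `[c, +oo[]) //.
  - apply: (eq_trans _ (integral0 Q (setT `\` [set` `[c, +oo[]))); apply: eq_integral => x.
    rewrite inE /= in_itv /= andbT => -[_ /negP]; rewrite -ltNge => xc.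
    by rewrite /g xc /sqloss subrr expr0n.
  - apply/measurable_EFinP => /=; rewrite /sqloss; apply: measurable_funX.
    exact: measurable_funB.
  - by move=> x _; rewrite lee_fin /sqloss sqr_ge0.
split.
  exists (fun _ => K); split => // h' _.
  by rewrite EK; apply: integral_ge0 => x _; rewrite lee_fin la0.
move=> h [hL hbest].
have mh : measurable_fun setT h := continuous_measurable_fun (@lip_cont _ L h L0 hL).
have Eh0 := hbest _ Klip; rewrite EK in Eh0.
have Eh : (\int[P]_x `|(la (g x) (h x))%:E| = 0)%E.
  under eq_integral do rewrite gee0_abs ?lee_fin ?la0 //.
  apply/eqP; rewrite eq_le Eh0 /=.
  by apply: integral_ge0 => x _; rewrite lee_fin la0.
have := (ae_eq_integral_abs P measurableT (mlah h mh)).1 Eh.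
case=> N [mN PN0 sN].
have [y [yI [yc yla]]] : exists y, `|y - c| < 1 /\ c <= y /\ la (g y) (h y) = 0.
  apply: contrapT => hn.
  have : msupport P c by rewrite sP /= in_itv /= lexx ltW.
  pose Ic : set R := [set` `]c - 1, c + 1[].
  move=> /(_ Ic) Pc.
  have Pc' : (0 < P Ic)%E.
    apply: Pc; first exact: interval_open.
    by rewrite /Ic /= in_itv /= ltrDl ltrBlDr ltrDl ltr01.
  have : (P Ic <= 0)%E.
    apply: (@le_trans _ _ (P ([set` `]-oo, c[] `|` N))).
      apply: le_measure; rewrite ?inE; try apply: measurableU;
        try exact: measurable_itv; try exact: mN.
      move=> z; rewrite /Ic /= in_itv /= => /andP[z1 z2].
      have [zc|cz] := ltP z c; [by left|right].
      apply: sN => /= H; apply: hn; exists z; split; last split => //.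
        by rewrite ltr_norml; apply/andP; split; lra.
      by have := H I; case.
    apply: le_trans (measureU2 P (measurable_itv `]-oo, c[) mN) _.
    have PL' : (P [set` `]-oo, c[] <= 0)%E by rewrite PL.
    have PN' : (P N <= 0)%E by rewrite PN0.
    by apply: le_trans (leeD PL' PN') _; rewrite adde0.
  by rewrite leNgt Pc'.
have hy : h y = K.
  move: yla; rewrite /g ltNge yc /= => /(laeq _ _).1 ->.
  by [].
have key x : Ia x -> t <= h x - f x.
  rewrite /Ia /= in_itv /= => /andP[x1 x2].
  have e1 : `|h x - h y| <= B1.
    apply: (le_trans (hL x y)); rewrite /B1 ler_wpM2l //.
    move: yI; rewrite ltr_norml => /andP[y1 y2].
    have [ac|ca] := leP a c.
      rewrite (ler0_norm (x := a - c)) ?subr_le0 //.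
      rewrite ler_norml; apply/andP; split; lra.
    rewrite (gtr0_norm (x := a - c)) ?subr_gt0 //.
    rewrite ler_norml; apply/andP; split; lra.
  have e2 : `|f x - f a| <= L.
    apply: (le_trans (fL x a)); rewrite -[leRHS]mulr1 ler_wpM2l //.
    rewrite ler_norml; apply/andP; split; lra.
  have e3 := ler_norm (f a).
  move: e1 e2; rewrite hy !ler_norml => /andP[e1 e1'] /andP[e2 e2'].
  have KE : K = B1 + (`|f a| + L) + t by [].
  lra.
rewrite /expected_loss.
have mint : measurable_fun setT (fun x => (sqloss (f x) (h x))%:E).
  apply/measurable_EFinP => /=; rewrite /sqloss; apply: measurable_funX.
  exact: measurable_funB.
have sub := @ge0_subset_integral _ _ _ Q Ia setT mIa measurableT _ mint
  (fun x _ => ltac:(by rewrite lee_fin /sqloss sqr_ge0)) (@subsetT _ Ia).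
apply: le_trans sub.
apply: (@le_trans _ _ (\int[Q]_(x in Ia) (cst (t ^+ 2)%:E) x)%E).
  rewrite integral_cst //.
  apply: (@le_trans _ _ ((t ^+ 2)%:E * q%:E)%E); last by rewrite -Qq; exact: le_refl.
  rewrite -EFinM lee_fin.
  have tpos : 1 <= t by apply: le_trans t1; rewrite lerDr.
  have : t * q <= t ^+ 2 * q by rewrite ler_wpM2r ?(ltW q0) // expr2 ler_peMl // (le_trans ler01).
  rewrite tq => h1; apply: le_trans h1; apply: le_trans (ler_norm M) _; rewrite lerDl //.
apply: ge0_le_integral => //.
- by move=> x _; rewrite lee_fin sqr_ge0.
- exact: measurable_funS mint.
move=> x Ix; rewrite lee_fin /sqloss.
have := key x Ix; have t0 : 0 <= t by apply: le_trans t1; rewrite addr_ge0.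
move=> h1; nra.
Qed.
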